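(* Let $P$ and $Q$ be irreducible transition matrices on the finite set $S$, both reversible with respect to $\pi$. If $P$ efficiency-dominates $Q$, then $P$ eigen-dominates $Q$.
   Context: $S$ is a finite set with $|S|=n$, and $\pi$ is a probability distribution on $S$ with $\pi(x)>0$ for all $x$. A transition matrix $P$ is reversible with respect to $\pi$ if $\pi(x)P(x,y)=\pi(y)P(y,x)$ for all $x,y$ (its eigenvalues are then real); irreducible if every state can be reached from every other with positive probability in some number of steps. For a Markov chain $X_1,X_2,\dots$ with transition matrix $P$ and $X_1\sim\pi$, $v(f,P)=\lim_{N\to\infty}\frac1N\mathrm{Var}\big(\sum_{i=1}^N f(X_i)\big)$. $P$ efficiency-dominates $Q$ if $v(f,P)\le v(f,Q)$ for all $f:S\to\mathbb R$. For reversible $P,Q$, $P$ eigen-dominates $Q$ if, writing the eigenvalues (with multiplicity) of $P$ as $\lambda_1\ge\dots\ge\lambda_n$ and those of $Q$ as $\beta_1\ge\dots\ge\beta_n$, we have $\lambda_i\le\beta_i$ for every $i$. *)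

(* Defs.v *)
From HB Require Import structures.
From mathcomp Require Import all_boot all_order all_algebra.
From mathcomp Require Import all_classical all_reals all_analysis.
Set Implicit Arguments. Unset Strict Implicit. Unset Printing Implicit Defensive.
Import Order.TTheory GRing.Theory Num.Theory.
Import numFieldNormedType.Exports.
Local Open Scope ring_scope.

(* The finite state space S with |S| = n is 'I_n. *)

Definition is_distribution (R : realType) (n : nat) (pi : 'I_n -> R) :=
  (forall x, 0 < pi x) /\ \sum_(x < n) pi x = 1.

Definition is_transition (R : realType) (n : nat) (P : 'M[R]_n) :=
  (forall x y, 0 <= P x y) /\ (forall x, \sum_(y < n) P x y = 1).

Definition reversible (R : realType) (n : nat) (pi : 'I_n -> R) (P : 'M[R]_n) :=
  forall x y, pi x * P x y = pi y * P y x.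

Definition irreducible (R : realType) (n : nat) (P : 'M[R]_n) :=
  forall x y, exists k : nat, 0 < (P ^+ k) x y.

(* Law of (X_1, ..., X_{N+1}) for the chain with X_1 ~ pi:
   P(X = x) = pi(x_1) * prod_i P(x_i, x_{i+1}). *)
Definition path_prob (R : realType) (n : nat) (pi : 'I_n -> R) (P : 'M[R]_n)
  (N : nat) (x : {ffun 'I_N.+1 -> 'I_n}) : R :=
  pi (x ord0) * \prod_(i < N) P (x (widen_ord (leqnSn N) i)) (x (lift ord0 i)).

Definition path_sum (R : realType) (n : nat) (f : 'I_n -> R)
  (N : nat) (x : {ffun 'I_N.+1 -> 'I_n}) : R := \sum_(i < N.+1) f (x i).

Definition var_sum (R : realType) (n : nat) (pi : 'I_n -> R) (P : 'M[R]_n)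
  (f : 'I_n -> R) (N : nat) : R :=
  \sum_(x : {ffun 'I_N.+1 -> 'I_n}) path_prob pi P x * (path_sum f x) ^+ 2
  - (\sum_(x : {ffun 'I_N.+1 -> 'I_n}) path_prob pi P x * path_sum f x) ^+ 2.

Definition asym_var (R : realType) (n : nat) (pi : 'I_n -> R) (P : 'M[R]_n)
  (f : 'I_n -> R) : R :=
  limn (fun N : nat => (N.+1%:R)^-1 * var_sum pi P f N).

Definition efficiency_dominates (R : realType) (n : nat) (pi : 'I_n -> R)
  (P Q : 'M[R]_n) :=
  forall f : 'I_n -> R, asym_var pi P f <= asym_var pi Q f.

(* lam is the nonincreasing list of eigenvalues of A with (algebraic) multiplicity *)
Definition sorted_eigenvalues (R : realType) (n : nat) (A : 'M[R]_n)
  (lam : 'I_n -> R) :=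
  (forall i j : 'I_n, (i <= j)%N -> lam j <= lam i) /\
  char_poly A = \prod_(i < n) ('X - (lam i)%:P).

Definition eigen_dominates (R : realType) (n : nat) (P Q : 'M[R]_n) :=
  exists lam beta : 'I_n -> R,
    [/\ sorted_eigenvalues P lam, sorted_eigenvalues Q beta &
        forall i, lam i <= beta i].

(* Main.v *)
Require Import Defs.
From HB Require Import structures.
From mathcomp Require Import all_boot all_order all_algebra.
From mathcomp Require Import all_classical all_reals all_analysis.
From mathcomp Require Import complex perm fingroup ring lra zify.
Import Order.TTheory GRing.Theory Num.Theory.
Import numFieldNormedType.Exports.
Set Implicit Arguments. Unset Strict Implicit. Unset Printing Implicit Defensive.
Local Open Scope ring_scope.

Section SpecPart.
Local Notation "x %:C" := (real_complex _ x) : ring_scope.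

Lemma sort_perm (R : rcfType) n (d : 'I_n -> R) :
  exists s : 'S_n, forall i j : 'I_n, (i <= j)%N -> d (s j) <= d (s i).
Proof.
case: n d => [|n] d.
  by exists 1%g => -[].
pose r := [rel i j : 'I_n.+1 | d j <= d i].
have rt : transitive r by move=> j i k /= h1 h2; exact: le_trans h2 h1.
have rr : reflexive r by move=> i /=.
have rtot : total r by move=> i j /=; exact: le_total.
pose l := sort r (enum 'I_n.+1).
have sl : size l = n.+1 by rewrite size_sort size_enum_ord.
have ul : uniq l by rewrite sort_uniq enum_uniq.
pose f := fun k : 'I_n.+1 => nth ord0 l k.
have finj : injective f.
  move=> i j /eqP; rewrite /f nth_uniq ?sl ?ltn_ord //.
  by move/eqP/val_inj.
exists (perm finj) => i j ij; rewrite !permE /f.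
have := sorted_leq_nth rt rr ord0 (sort_sorted rtot (enum 'I_n.+1)).
by move=> /(_ i j); rewrite !inE sl !ltn_ord => /(_ isT isT ij).
Qed.

Lemma char_poly_conj (F : fieldType) n (V A : 'M[F]_n) :
  V \in unitmx -> char_poly (V *m A *m invmx V) = char_poly A.
Proof.
move=> Vu; rewrite /char_poly /char_poly_mx.
set V' := map_mx polyC V; set W' := map_mx polyC (invmx V).
have VW : V' *m W' = 1%:M by rewrite -map_mxM mulmxV // map_mx1.
have XC : V' *m ('X%:M : 'M[{poly F}]_n) *m W' = 'X%:M.
  by rewrite mul_mx_scalar -scalemxAl VW scalemx1.
rewrite !map_mxM -/V' -/W' -[in LHS]XC -mulmxBl -mulmxBr.
by rewrite !det_mulmx mulrAC -det_mulmx VW det1 mul1r.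
Qed.

Lemma Creal_eq (R : rcfType) (x : R[i]) : x \is Num.real -> x = (complex.Re x)%:C.
Proof.
case: x => a b; rewrite realE !lecE /=.
by case/orP => /andP[/eqP H _]; [rewrite H | rewrite -H].
Qed.

Lemma real_spectral (R : rcfType) n (A : 'M[R]_n) : A^T = A ->
  exists (U : 'M[R[i]]_n) (d : 'I_n -> R), [/\ U \is unitarymx,
    map_mx (real_complex R) A = (U^t*)%sesqui *m diag_mx (\row_i (d i)%:C) *m U &
    char_poly A = \prod_i ('X - (d i)%:P)].
Proof.
move=> Asym.
set AC := map_mx (real_complex R) A.
have Ah : AC \is hermsymmx.
  apply/is_hermitianmxP; rewrite expr0 scale1r; apply/matrixP => i j.
  rewrite !mxE -{1}Asym mxE /=.
  by apply/eqP; rewrite eq_complex /= oppr0 !eqxx.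
have /orthomx_spectralP eqA := hermitian_normalmx Ah.
set U := spectralmx AC in eqA *.
pose d i := complex.Re (spectral_diag AC 0 i).
have dr : spectral_diag AC = \row_i (d i)%:C.
  apply/rowP => i; rewrite mxE; apply: Creal_eq.
  exact: (mxOverP (hermitian_spectral_diag_real Ah)).
have Uu : U \is unitarymx by exact: spectral_unitarymx.
exists U, d; split => //.
  by rewrite -dr -invmx_unitary.
apply: (@map_poly_inj _ _ (real_complex R)).
rewrite map_char_poly -/AC eqA -[U in _ *m U]invmxK char_poly_conj; last first.
  by rewrite unitmx_inv unitarymx_unit.
rewrite char_poly_trig ?diag_mx_is_trig // rmorph_prod.
apply: eq_bigr => i _; rewrite dr !mxE eqxx mulr1n.
by rewrite rmorphB /= map_polyX map_polyC.
Qed.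

Local Open Scope sesquilinear_scope.

Section Unit.
Variable C : numClosedFieldType.

Lemma rowsub1_unitary m n (f : 'I_m -> 'I_n) : injective f ->
  rowsub f (1%:M : 'M[C]_n) \is unitarymx.
Proof.
move=> finj; apply/unitarymxP/matrixP => i j; rewrite !mxE.
rewrite (bigD1 (f i)) //= big1 => [|l /negbTE nl]; last first.
  by rewrite !mxE eq_sym nl mul0r.
by rewrite !mxE eqxx mul1r addr0 (inj_eq finj) eq_sym; case: eqP; rewrite ?conjC1 ?conjC0.
Qed.

Lemma rowsub_unitary m n (f : 'I_m -> 'I_n) (U : 'M[C]_n) : injective f ->
  U \is unitarymx -> rowsub f U \is unitarymx.
Proof. by move=> finj Uu; rewrite rowsubE mul_unitarymx // rowsub1_unitary. Qed.

Lemma norm_rowsub m n (f : 'I_m -> 'I_n) (U : 'M[C]_n) (a : 'rV_m) :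
  injective f -> U \is unitarymx ->
  (a *m rowsub f U) *m (a *m rowsub f U)^t* = a *m a^t*.
Proof.
move=> finj Uu; rewrite trmx_mul map_mxM mulmxA mulmxtVK //.
exact: rowsub_unitary.
Qed.

Lemma qf_rowsub m n (f : 'I_m -> 'I_n) (U : 'M[C]_n) (a : 'rV_m) (d : 'rV_n) :
  injective f -> U \is unitarymx ->
  (a *m rowsub f U) *m (U^t* *m diag_mx d *m U) *m (a *m rowsub f U)^t* =
  a *m diag_mx (\row_j d 0 (f j)) *m a^t*.
Proof.
move=> finj Uu; rewrite rowsubE trmx_mul map_mxM trmx_mul map_mxM.
have UU : U *m U^t* = 1%:M by apply/unitarymxP.
set E := rowsub f 1%:M.
rewrite !mulmxA -(mulmxA (a *m E) U) UU mulmx1 -(mulmxA _ U) UU mulmx1.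
congr (_ *m _); rewrite -!mulmxA; congr (_ *m _).
apply/matrixP => i j; rewrite mul_rowsub_mx mul1mx !mxE.
rewrite (bigD1 (f i)) //= big1 => [|l /negbTE nl]; last first.
  by rewrite !mxE eq_sym nl mulr0n mul0r.
rewrite !mxE eqxx mulr1n addr0 (inj_eq finj) eq_sym.
by case: eqP => [->|]; rewrite ?eqxx ?conjC1 ?conjC0 ?mulr1 ?mulr0 ?mulr1n ?mulr0n.
Qed.

Lemma quad_diag n (a e : 'rV[C]_n) :
  (a *m diag_mx e *m a^t*) 0 0 = \sum_j a 0 j * e 0 j * (a 0 j)^*.
Proof.
rewrite mul_mx_diag !mxE; apply: eq_bigr => j _; rewrite !mxE //.
Qed.

End Unit.

Lemma sum_complex (R : rcfType) (I : finType) (a b : I -> R) :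
  \sum_i (Complex (a i) (b i) : R[i]) = Complex (\sum_i a i) (\sum_i b i).
Proof. by elim/big_rec3: _ => //= i z u v _ ->. Qed.

Lemma sum_complex2 (R : rcfType) (I J : finType) (a b : I -> J -> R) :
  \sum_i \sum_j (Complex (a i j) (b i j) : R[i]) =
  Complex (\sum_i \sum_j a i j) (\sum_i \sum_j b i j).
Proof.
under eq_bigr => i _ do rewrite (sum_complex (a i) (b i)).
exact: sum_complex.
Qed.

Lemma psd_transfer (R : rcfType) n (M : 'M[R]_n) : M^T = M ->
  (forall y : 'rV[R]_n, 0 <= (y *m M *m y^T) 0 0) ->
  forall x : 'rV[R[i]]_n, 0 <= (x *m map_mx (real_complex R) M *m x^t*) 0 0.
Proof.
move=> Ms Mpsd x.
pose p := \row_i complex.Re (x 0 i); pose q := \row_i complex.Im (x 0 i).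
have -> : (x *m map_mx (real_complex R) M *m x^t*) 0 0 =
    ((p *m M *m p^T) 0 0 + (q *m M *m q^T) 0 0)%:C.
  rewrite !mxE.
  under eq_bigr => j _ do rewrite !mxE mulr_suml.
  rewrite exchange_big /=.
  have -> : \sum_i \sum_j (x 0 i * (map_mx (real_complex R) M) i j * (x 0 j)^*) =
    \sum_i \sum_j Complex (M i j * (p 0 i * p 0 j + q 0 i * q 0 j))
                          (M i j * (q 0 i * p 0 j - p 0 i * q 0 j)).
    apply: eq_bigr => i _; apply: eq_bigr => j _; rewrite !mxE.
    case: (x 0 i) => a b; case: (x 0 j) => c e /=.
    by apply/eqP; rewrite eq_complex /=; apply/andP; split; apply/eqP; ring.
  rewrite (sum_complex2 (fun i j => M i j * (p 0 i * p 0 j + q 0 i * q 0 j))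
     (fun i j => M i j * (q 0 i * p 0 j - p 0 i * q 0 j))).
  have -> : \sum_i \sum_j M i j * (q 0 i * p 0 j - p 0 i * q 0 j) = 0.
    under eq_bigr => i _ do under eq_bigr => j _ do rewrite mulrBr.
    under eq_bigr => i _ do rewrite sumrB.
    rewrite sumrB exchange_big /=.
    apply/eqP; rewrite subr_eq0; apply/eqP; apply: eq_bigr => j _.
    apply: eq_bigr => i _; rewrite -{1}Ms mxE; ring.
  have H (y : 'rV[R]_n) : \sum_j (y *m M) 0 j * y^T j 0 =
      \sum_i \sum_j M i j * (y 0 i * y 0 j).
    rewrite exchange_big; apply: eq_bigr => j _; rewrite !mxE mulr_suml.
    by apply: eq_bigr => i _; rewrite ?mxE; ring.
  apply: (congr1 (fun r => Complex r 0)).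
  rewrite !H -big_split /=; apply: eq_bigr => i _.
  rewrite -big_split; apply: eq_bigr => j _ /=; ring.
by rewrite ler0c addr_ge0.
Qed.

Lemma norm_pos (R : rcfType) n (x : 'rV[R[i]]_n) : x != 0 -> 0 < (x *m x^t*) 0 0.
Proof.
move=> x0; rewrite !mxE.
have ge0 : forall j : 'I_n, true -> 0 <= x 0 j * (x^t*) j 0.
  by move=> j _; rewrite !mxE mul_conjC_ge0.
rewrite lt_def sumr_ge0 // andbT; apply: contra x0 => /eqP S.
apply/eqP/rowP => j; rewrite mxE.
have /eqP := psumr_eq0P ge0 S (i := j) isT; rewrite !mxE mul_conjC_eq0.
by move/eqP.
Qed.

Lemma mxsubE (V : zmodType) m n (M N : 'M[V]_(m, n)) i j :
  (M - N) i j = M i j - N i j.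
Proof. by rewrite !mxE. Qed.

Lemma weyl (R : rcfType) n (A B : 'M[R]_n) : A^T = A -> B^T = B ->
  (forall x : 'rV[R]_n, (x *m A *m x^T) 0 0 <= (x *m B *m x^T) 0 0) ->
  exists lam beta : 'I_n -> R,
    [/\ (forall i j : 'I_n, (i <= j)%N -> lam j <= lam i) /\
        char_poly A = \prod_(i < n) ('X - (lam i)%:P),
        (forall i j : 'I_n, (i <= j)%N -> beta j <= beta i) /\
        char_poly B = \prod_(i < n) ('X - (beta i)%:P) &
        forall i, lam i <= beta i].
Proof.
case: n A B => [|n] A B As Bs AB.
  exists (fun _ => 0), (fun _ => 0); split; try split; try by case.
    by rewrite big_ord0 /char_poly det_mx00.
  by rewrite big_ord0 /char_poly det_mx00.
have [U [a [Uu EA cA]]] := real_spectral As.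
have [W [b [Wu EB cB]]] := real_spectral Bs.
have [s sP] := sort_perm a; have [t tP] := sort_perm b.
exists (fun i => a (s i)), (fun i => b (t i)); split.
- by split => //; rewrite cA (reindex_inj (@perm_inj _ s)).
- by split => //; rewrite cB (reindex_inj (@perm_inj _ t)).
move=> k.
have Mpsd : forall y : 'rV[R]_n.+1, 0 <= (y *m (B - A) *m y^T) 0 0.
  by move=> y; rewrite mulmxBr mulmxBl mxsubE subr_ge0.
have Ms : (B - A)^T = B - A by rewrite linearB /= As Bs.
pose f1 := fun j : 'I_k.+1 => s (widen_ord (ltn_ord k) j).
pose f2 := fun j : 'I_(n.+1 - k) => t (inord (k + j)).
have f1i : injective f1.
  move=> j1 j2; rewrite /f1 => /perm_inj /(congr1 val) /= H; exact: val_inj.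
have f2i : injective f2.
  move=> j1 j2; rewrite /f2 => /perm_inj /(congr1 val); rewrite /= !inordK; last 2 first.
  - by have := ltn_ord j2; lia.
  - by have := ltn_ord j1; lia.
  by move/addnI/val_inj.
pose V := rowsub f1 U; pose X := rowsub f2 W.
have rV : \rank V = k.+1 by apply: mxrank_unitary; exact: rowsub_unitary.
have rX : \rank X = (n.+1 - k)%N by apply: mxrank_unitary; exact: rowsub_unitary.
have rC : (\rank (V :&: X) != 0)%N.
  have := mxrank_sum_cap V X; have := rank_leq_col (V + X)%MS.
  rewrite rV rX; have := ltn_ord k; lia.
rewrite mxrank_eq0 -nz_row_eq0 in rC.
set x := nz_row _ in rC.
have : (x <= V :&: X)%MS by exact: nz_row_sub.
rewrite sub_capmx => /andP[/submxP[c xc] /submxP[e xe]].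
pose N := (x *m x^t*) 0 0.
have Npos : 0 < N by exact: norm_pos.
have NA : N = \sum_j c 0 j * (c 0 j)^*.
  by rewrite /N xc norm_rowsub // !mxE; apply: eq_bigr => j _; rewrite !mxE.
have NB : N = \sum_j e 0 j * (e 0 j)^*.
  by rewrite /N xe norm_rowsub // !mxE; apply: eq_bigr => j _; rewrite !mxE.
have qA : (x *m map_mx (real_complex R) A *m x^t*) 0 0 =
    \sum_j c 0 j * (a (f1 j))%:C * (c 0 j)^*.
  rewrite EA xc qf_rowsub // quad_diag; apply: eq_bigr => j _; rewrite !mxE //.
have qB : (x *m map_mx (real_complex R) B *m x^t*) 0 0 =
    \sum_j e 0 j * (b (f2 j))%:C * (e 0 j)^*.
  rewrite EB xe qf_rowsub // quad_diag; apply: eq_bigr => j _; rewrite !mxE //.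
have lo : (a (s k))%:C * N <= (x *m map_mx (real_complex R) A *m x^t*) 0 0.
  rewrite qA NA mulr_sumr; apply: ler_sum => j _.
  rewrite [X in _ <= X]mulrAC [X in X <= _]mulrC.
  apply: ler_wpM2l; first exact: mul_conjC_ge0.
  rewrite lecR; apply: sP => /=.
  by have := ltn_ord j; lia.
have hi : (x *m map_mx (real_complex R) B *m x^t*) 0 0 <= (b (t k))%:C * N.
  rewrite qB NB mulr_sumr; apply: ler_sum => j _.
  rewrite [X in X <= _]mulrAC [X in _ <= X]mulrC.
  apply: ler_wpM2l; first exact: mul_conjC_ge0.
  rewrite lecR; apply: tP => /=.
  rewrite inordK //; have := ltn_ord j; lia.
have mid : (x *m map_mx (real_complex R) A *m x^t*) 0 0 <=
           (x *m map_mx (real_complex R) B *m x^t*) 0 0.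
  have := psd_transfer Ms Mpsd x.
  by rewrite map_mxB mulmxBr mulmxBl mxsubE subr_ge0.
rewrite -lecR -(ler_pM2r Npos).
exact: le_trans lo (le_trans mid hi).
Qed.

End SpecPart.

Section MarkovPart.

Definition ext (n N : nat) (x : {ffun 'I_N.+1 -> 'I_n}) (z : 'I_n) :
  {ffun 'I_N.+2 -> 'I_n} :=
  [ffun i : 'I_N.+2 => if (i < N.+1)%N then x (inord i) else z].

Definition init (n N : nat) (y : {ffun 'I_N.+2 -> 'I_n}) : {ffun 'I_N.+1 -> 'I_n} :=
  [ffun j => y (widen_ord (leqnSn _) j)].

Lemma extE n N (x : {ffun 'I_N.+1 -> 'I_n}) z (i : 'I_N.+2) (j : 'I_N.+1) :
  val i = val j -> ext x z i = x j.
Proof.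
move=> ij; rewrite ffunE ij ltn_ord; congr (x _); apply: val_inj.
by rewrite /= inordK.
Qed.

Lemma extE_last n N (x : {ffun 'I_N.+1 -> 'I_n}) z (i : 'I_N.+2) :
  val i = N.+1 -> ext x z i = z.
Proof. by move=> ij; rewrite ffunE ij ltnn. Qed.

Lemma init_ext n N (x : {ffun 'I_N.+1 -> 'I_n}) z : init (ext x z) = x.
Proof. by apply/ffunP => j; rewrite ffunE (extE _ _ (j := j)). Qed.

Lemma ext_init n N (y : {ffun 'I_N.+2 -> 'I_n}) : ext (init y) (y ord_max) = y.
Proof.
apply/ffunP => i; rewrite ffunE; case: ifP => hi.
  by rewrite ffunE; congr (y _); apply: val_inj; rewrite /= inordK.
congr (y _); apply: val_inj => /=; have := ltn_ord i; lia.
Qed.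

Lemma sum_ext (R : realType) n N (F : {ffun 'I_N.+2 -> 'I_n} -> R) :
  \sum_y F y = \sum_x \sum_z F (ext x z).
Proof.
rewrite pair_big /= (reindex (fun p : {ffun 'I_N.+1 -> 'I_n} * 'I_n => ext p.1 p.2)) //=.
apply: onW_bij; exists (fun y => (init y, y ord_max)) => [[x z]|y] /=.
  by rewrite init_ext (extE_last _ _ (i := ord_max)).
exact: ext_init.
Qed.

Lemma sum_1 (R : realType) n (F : {ffun 'I_1 -> 'I_n} -> R) :
  \sum_y F y = \sum_z F [ffun _ => z].
Proof.
rewrite (reindex (fun z : 'I_n => [ffun _ : 'I_1 => z])) //=.
apply: onW_bij; exists (fun y : {ffun 'I_1 -> 'I_n} => y ord0) => [z|y] /=; first by rewrite ffunE.
by apply/ffunP => i; rewrite ffunE; congr (y _); apply: val_inj; case: i => -[].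
Qed.

Lemma pp_ext (R : realType) n (pi : 'I_n -> R) (P : 'M[R]_n) N
  (x : {ffun 'I_N.+1 -> 'I_n}) z :
  path_prob pi P (ext x z) = path_prob pi P x * P (x ord_max) z.
Proof.
rewrite /path_prob big_ord_recr /= (extE _ _ (j := ord0)) //.
rewrite (extE _ _ (j := ord_max)) // (extE_last _ _ (i := lift ord0 ord_max)) //.
rewrite mulrA; congr (_ * _ * _); apply: eq_bigr => i _.
by rewrite (extE _ _ (j := widen_ord (leqnSn N) i)) // (extE _ _ (j := lift ord0 i)).
Qed.

Lemma pp_1 (R : realType) n (pi : 'I_n -> R) (P : 'M[R]_n) z :
  path_prob pi P [ffun _ : 'I_1 => z] = pi z.
Proof. by rewrite /path_prob big_ord0 mulr1 ffunE. Qed.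

Lemma ps_ext (R : realType) n (f : 'I_n -> R) N (x : {ffun 'I_N.+1 -> 'I_n}) z :
  path_sum f (ext x z) = path_sum f x + f z.
Proof.
rewrite /path_sum big_ord_recr /= (extE_last _ _ (i := ord_max)) //.
by congr (_ + _); apply: eq_bigr => i _; rewrite (extE _ _ (j := i)).
Qed.

Lemma ps_1 (R : realType) n (f : 'I_n -> R) z :
  path_sum f [ffun _ : 'I_1 => z] = f z.
Proof. by rewrite /path_sum big_ord1 ffunE. Qed.

Definition Pf (R : realType) n (P : 'M[R]_n) (g : 'I_n -> R) : 'I_n -> R :=
  fun y => \sum_z P y z * g z.
Definition Pk (R : realType) n (P : 'M[R]_n) k (g : 'I_n -> R) := iter k (Pf P) g.
Definition ip (R : realType) n (pi : 'I_n -> R) (g h : 'I_n -> R) :=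
  \sum_x pi x * g x * h x.

Lemma stat (R : realType) n (pi : 'I_n -> R) (P : 'M[R]_n) (g : 'I_n -> R) :
  is_transition P -> reversible pi P ->
  \sum_y pi y * Pf P g y = \sum_y pi y * g y.
Proof.
move=> [_ rs] rev; rewrite /Pf.
under eq_bigr => y _ do rewrite mulr_sumr.
rewrite exchange_big /=; apply: eq_bigr => z _.
under eq_bigr => y _ do rewrite mulrA rev -mulrA.
by rewrite -mulr_sumr -big_distrl /= rs mul1r.
Qed.

Lemma ip_sym (R : realType) n (pi : 'I_n -> R) g h : ip pi g h = ip pi h g.
Proof. by apply: eq_bigr => x _; ring. Qed.

Lemma ip_adj (R : realType) n (pi : 'I_n -> R) (P : 'M[R]_n) g h :
  reversible pi P -> ip pi g (Pf P h) = ip pi (Pf P g) h.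
Proof.
move=> rev; rewrite /ip /Pf.
under eq_bigr => x _ do rewrite mulr_sumr.
under [RHS]eq_bigr => x _ do rewrite mulr_sumr mulr_suml.
rewrite [RHS]exchange_big /=; apply: eq_bigr => x _; apply: eq_bigr => y _.
transitivity (pi x * P x y * g x * h y); first by ring.
by rewrite rev; ring.
Qed.

Lemma mom0 (R : realType) n (pi : 'I_n -> R) (P : 'M[R]_n) :
  is_transition P -> reversible pi P -> forall N (phi : 'I_n -> R),
  \sum_(x : {ffun 'I_N.+1 -> 'I_n}) path_prob pi P x * phi (x ord_max) =
  \sum_y pi y * phi y.
Proof.
move=> tP rev; elim=> [|N IH] phi.
  by rewrite sum_1; apply: eq_bigr => z _; rewrite pp_1 ffunE.
rewrite sum_ext.
under eq_bigr => x _ do under eq_bigr => z _ do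
  rewrite pp_ext (extE_last _ _ (i := ord_max)) // -mulrA.
under eq_bigr => x _ do rewrite -mulr_sumr.
have := IH (Pf P phi); rewrite /Pf => ->.
exact: stat.
Qed.

Lemma ipf (R : realType) n (pi : 'I_n -> R) (P : 'M[R]_n) (f u phi : 'I_n -> R) :
  reversible pi P -> (forall y, f y = u y - Pf P u y) ->
  ip pi f phi = ip pi u phi - ip pi u (Pf P phi).
Proof.
move=> rev hf; rewrite (ip_adj _ _ rev) /ip -sumrB.
by apply: eq_bigr => x _; rewrite hf; ring.
Qed.

Lemma mom1 (R : realType) n (pi : 'I_n -> R) (P : 'M[R]_n) (f u : 'I_n -> R) :
  is_transition P -> reversible pi P -> (forall y, f y = u y - Pf P u y) ->
  forall N (phi : 'I_n -> R),
  \sum_(x : {ffun 'I_N.+1 -> 'I_n}) path_prob pi P x * (path_sum f x * phi (x ord_max)) =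
  ip pi u phi - ip pi u (Pk P N.+1 phi).
Proof.
move=> tP rev hf; elim=> [|N IH] phi.
  rewrite sum_1 (_ : Pk P 1 phi = Pf P phi) // -(ipf phi rev hf); apply: eq_bigr => z _.
  by rewrite pp_1 ps_1 ffunE; ring.
have E : forall a b c d e : R,
    a * b * ((c + d) * e) = a * (c * (b * e)) + a * (b * (d * e)).
  by move=> *; ring.
rewrite sum_ext.
under eq_bigr => x _ do under eq_bigr => z _ do
  rewrite pp_ext ps_ext (extE_last _ _ (i := ord_max)) // E.
under eq_bigr => x _ do rewrite big_split /= -!mulr_sumr.
rewrite big_split /=.
have h1 := IH (Pf P phi).
rewrite (_ : Pk P N.+1 (Pf P phi) = Pk P N.+2 phi) in h1; last by rewrite /Pk [RHS]iterSr.
rewrite /Pf in h1; rewrite h1.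
have h2 := mom0 tP rev N (Pf P (fun z => f z * phi z)); rewrite /Pf in h2; rewrite h2.
have h3 := stat (fun z => f z * phi z) tP rev; rewrite /Pf in h3; rewrite h3.
have h4 := ipf phi rev hf.
rewrite /ip in h4 *.
have -> : \sum_y pi y * (f y * phi y) = \sum_x pi x * f x * phi x.
  by apply: eq_bigr => x _; ring.
rewrite h4 /Pf; ring.
Qed.

Lemma Pk_one (R : realType) n (P : 'M[R]_n) :
  is_transition P -> forall k y, Pk P k (fun _ => 1) y = 1.
Proof.
move=> [_ rs]; elim=> [//|k IH] y /=.
rewrite /Pf; under eq_bigr => z _ do rewrite IH mulr1.
exact: rs.
Qed.

Lemma Pk_lin (R : realType) n (P : 'M[R]_n) k (g h1 h2 : 'I_n -> R) :
  (forall y, g y = h1 y - h2 y) ->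
  forall y, Pk P k g y = Pk P k h1 y - Pk P k h2 y.
Proof.
move=> hg; elim: k => [//|k IH] y /=.
rewrite /Pf -sumrB; apply: eq_bigr => z _; rewrite IH; ring.
Qed.

Lemma ipB_r (R : realType) n (pi : 'I_n -> R) (g h h1 h2 : 'I_n -> R) :
  (forall y, h y = h1 y - h2 y) -> ip pi g h = ip pi g h1 - ip pi g h2.
Proof. by move=> hh; rewrite /ip -sumrB; apply: eq_bigr => x _; rewrite hh; ring. Qed.

Lemma ipk (R : realType) n (pi : 'I_n -> R) (P : 'M[R]_n) (f u : 'I_n -> R) :
  (forall y, f y = u y - Pf P u y) -> forall k,
  ip pi u (Pk P k f) = ip pi u (Pk P k u) - ip pi u (Pk P k.+1 u).
Proof.
move=> hf k; apply: ipB_r => y; rewrite (Pk_lin P k (h1 := u) (h2 := Pf P u)) //.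
by rewrite /Pk [in RHS]iterSr.
Qed.

Lemma mean0 (R : realType) n (pi : 'I_n -> R) (P : 'M[R]_n) (f u : 'I_n -> R) :
  is_transition P -> reversible pi P -> (forall y, f y = u y - Pf P u y) ->
  forall N, \sum_(x : {ffun 'I_N.+1 -> 'I_n}) path_prob pi P x * path_sum f x = 0.
Proof.
move=> tP rev hf N; have := mom1 tP rev hf N (fun _ => 1).
under eq_bigr => x _ do rewrite mulr1.
move=> ->; rewrite /ip [X in _ - X](eq_bigr (fun x => pi x * u x * 1)) ?subrr //.
by move=> x _; rewrite Pk_one.
Qed.

Lemma ipff (R : realType) n (pi : 'I_n -> R) (P : 'M[R]_n) (f u : 'I_n -> R) :
  reversible pi P -> (forall y, f y = u y - Pf P u y) ->
  ip pi f f = ip pi u (Pk P 0 u) - 2 * ip pi u (Pk P 1 u) + ip pi u (Pk P 2 u).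
Proof.
move=> rev hf; rewrite (ipf f rev hf).
have := ipk pi hf 0; have := ipk pi hf 1; rewrite /= => -> ->; ring.
Qed.

Lemma mom2 (R : realType) n (pi : 'I_n -> R) (P : 'M[R]_n) (f u : 'I_n -> R) :
  is_transition P -> reversible pi P -> (forall y, f y = u y - Pf P u y) ->
  forall N,
  \sum_(x : {ffun 'I_N.+1 -> 'I_n}) path_prob pi P x * path_sum f x ^+ 2 =
  N.+1%:R * (ip pi u (Pk P 0 u) - ip pi u (Pk P 2 u))
  - 2 * (ip pi u (Pk P 1 u) - ip pi u (Pk P N.+2 u)).
Proof.
move=> tP rev hf; have ff := ipff rev hf; elim=> [|N IH].
  rewrite sum_1.
  transitivity (ip pi f f).
    by rewrite /ip; apply: eq_bigr => z _; rewrite pp_1 ps_1; ring.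
  rewrite ff; ring.
have E : forall a b c d : R,
    a * b * (c + d) ^+ 2 = a * (c ^+ 2 * b) + (a * (c * (b * d))) *+ 2 + a * (b * d ^+ 2).
  by move=> *; ring.
rewrite sum_ext.
under eq_bigr => x _ do under eq_bigr => z _ do
  rewrite pp_ext ps_ext E.
under eq_bigr => x _ do rewrite !big_split /= -!mulr_sumr.
rewrite !big_split /=.
case: tP => [P0 rs].
under eq_bigr => x _ do rewrite rs mulr1.
rewrite IH.
have h1 := mom1 (conj P0 rs) rev hf N (Pf P f).
rewrite (_ : Pk P N.+1 (Pf P f) = Pk P N.+2 f) in h1; last by rewrite /Pk [RHS]iterSr.
rewrite (_ : Pf P f = Pk P 1 f) // in h1.
rewrite !(ipk pi hf) in h1.
rewrite /Pf in h1; rewrite h1.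
have h2 := mom0 (conj P0 rs) rev N (Pf P (fun z => f z ^+ 2)); rewrite /Pf in h2; rewrite h2.
have h3 := stat (fun z => f z ^+ 2) (conj P0 rs) rev; rewrite /Pf in h3; rewrite h3.
have -> : \sum_y pi y * f y ^+ 2 = ip pi f f by apply: eq_bigr => z _; rewrite /ip; ring.
rewrite ff.
rewrite /Pk /= -[N.+2]addn1 natrD; ring.
Qed.
Lemma lim_aux (R : realType) (s B : R) (u w : nat -> R) :
  (forall N, `|w N| <= B) -> (forall N, u N = s + (N.+1%:R)^-1 * w N) ->
  limn u = s.
Proof.
move=> wB uE; apply: cvg_lim => //.
apply: (squeeze_cvgr (f := fun N => s - B * harmonic N)
                     (h := fun N => s + B * harmonic N)).
- apply: nearW => N; rewrite uE /=.
  have h0 := harmonic_gt0 (R:=R) N.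
  have := wB N; rewrite ler_norml => /andP[w1 w2].
  have e1 : - (B * harmonic N) <= harmonic N * w N.
    by rewrite mulrC -mulrN ler_pM2l.
  have e2 : harmonic N * w N <= B * harmonic N by rewrite [B * _]mulrC ler_pM2l.
  change (N.+1%:R^-1) with (harmonic (R:=R) N).
  apply/andP; split; lra.
- rewrite -{2}(subr0 s); apply: cvgB; first exact: cvg_cst.
  by rewrite -(mulr0 B); apply: cvgMl_tmp; exact: cvg_harmonic.
- rewrite -{2}(addr0 s); apply: cvgD; first exact: cvg_cst.
  by rewrite -(mulr0 B); apply: cvgMl_tmp; exact: cvg_harmonic.
Qed.

Lemma Pk_bound (R : realType) n (P : 'M[R]_n) (u : 'I_n -> R) :
  is_transition P -> forall k y, `|Pk P k u y| <= \sum_z `|u z|.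
Proof.
move=> [P0 rs]; elim=> [|k IH] y /=.
  by rewrite (bigD1 y) //= lerDl sumr_ge0.
rewrite /Pf; apply: le_trans (ler_norm_sum _ _ _) _.
apply: le_trans (_ : \sum_z P y z * \sum_z `|u z| <= _).
  apply: ler_sum => z _; rewrite normrM ger0_norm //.
  by apply: ler_wpM2l => //; exact: IH.
by rewrite -mulr_suml rs mul1r.
Qed.

Lemma asymE (R : realType) n (pi : 'I_n -> R) (P : 'M[R]_n) (f u : 'I_n -> R) :
  (forall x, 0 <= pi x) ->
  is_transition P -> reversible pi P -> (forall y, f y = u y - Pf P u y) ->
  asym_var pi P f = ip pi u u - ip pi u (Pf P (Pf P u)).
Proof.
move=> pi0 tP rev hf.
pose Bd := \sum_x pi x * `|u x| * \sum_z `|u z|.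
have aB : forall k, `|ip pi u (Pk P k u)| <= Bd.
  move=> k; apply: le_trans (ler_norm_sum _ _ _) _; apply: ler_sum => x _.
  rewrite normrM normrM ger0_norm //; apply: ler_wpM2l.
    by rewrite mulr_ge0.
  exact: Pk_bound.
apply: (lim_aux (B := 4 * Bd)
  (w := fun N => -2 * (ip pi u (Pk P 1 u) - ip pi u (Pk P N.+2 u)))).
  move=> N; rewrite normrM normrN (ger0_norm (_ : (0:R) <= 2)) //.
  have := ler_normB (ip pi u (Pk P 1 u)) (ip pi u (Pk P N.+2 u)).
  have := aB 1; have := aB N.+2; lra.
move=> N; rewrite /var_sum (mom2 tP rev hf) (mean0 tP rev hf) expr2 mulr0 subr0.
rewrite /=; field.
by rewrite addrC natr1 pnatr_eq0.
Qed.

Lemma dirichlet (R : realType) n (pi : 'I_n -> R) (P : 'M[R]_n) (w : 'I_n -> R) :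
  (forall x, 0 <= pi x) -> is_transition P -> reversible pi P ->
  0 <= ip pi w w - ip pi w (Pf P w).
Proof.
move=> pi0 [P0 rs] rev.
pose T := \sum_x \sum_y pi x * P x y * (w x * (w x - w y)).
have eT : ip pi w w - ip pi w (Pf P w) = T.
  rewrite /ip /Pf /T -sumrB; apply: eq_bigr => x _.
  rewrite [RHS](eq_bigr (fun y => pi x * w x * w x * P x y - pi x * w x * (P x y * w y))); last by move=> y _; ring.
  by rewrite sumrB -!mulr_sumr rs mulr1.
have sT : T = \sum_x \sum_y pi x * P x y * (w y * (w y - w x)).
  rewrite /T exchange_big /=; apply: eq_bigr => x _; apply: eq_bigr => y _.
  by rewrite rev.
have TT : T + T = \sum_x \sum_y pi x * P x y * (w x - w y) ^+ 2.
  rewrite {2}sT /T -big_split /=; apply: eq_bigr => x _.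
  rewrite -big_split /=; apply: eq_bigr => y _; ring.
have : 0 <= T + T.
  rewrite TT; apply: sumr_ge0 => x _; apply: sumr_ge0 => y _.
  by rewrite mulr_ge0 ?sqr_ge0 // mulr_ge0.
rewrite eT; lra.
Qed.

Lemma ipB_l (R : realType) n (pi : 'I_n -> R) (g h h1 h2 : 'I_n -> R) :
  (forall y, h y = h1 y - h2 y) -> ip pi h g = ip pi h1 g - ip pi h2 g.
Proof. by move=> hh; rewrite /ip -sumrB; apply: eq_bigr => x _; rewrite hh; ring. Qed.

Lemma loewner (R : realType) n (pi : 'I_n -> R) (P Q : 'M[R]_n) :
  (forall x, 0 <= pi x) -> is_transition P -> is_transition Q ->
  reversible pi P -> reversible pi Q ->
  (forall f : 'I_n -> R, \sum_y pi y * f y = 0 ->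
     exists u : 'I_n -> R, forall y, u y - Pf P u y = f y) ->
  efficiency_dominates pi P Q ->
  forall g, ip pi g (Pf P g) <= ip pi g (Pf Q g).
Proof.
move=> pi0 tP tQ revP revQ solvP dom g.
pose f := fun y => g y - Pf Q g y.
have f0 : \sum_y pi y * f y = 0.
  rewrite /f; under eq_bigr => y _ do rewrite mulrBr.
  by rewrite sumrB (stat _ tQ revQ) subrr.
have [u hu] := solvP f f0.
have hfP : forall y, f y = u y - Pf P u y by move=> y; rewrite hu.
have hfQ : forall y, f y = g y - Pf Q g y by [].
have d := dom f; rewrite (asymE pi0 tP revP hfP) (asymE pi0 tQ revQ hfQ) in d.
have ffP := ipff revP hfP; have ffQ := ipff revQ hfQ.
rewrite /Pk /= in ffP ffQ.
have fg1 : ip pi f g = ip pi g g - ip pi g (Pf Q g).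
  by rewrite ip_sym; apply: ipB_r.
have fg2 := ipf g revP hfP.
pose w := fun y => g y - u y.
have D := dirichlet w pi0 tP revP.
have e1 : ip pi w w = ip pi g w - ip pi u w by apply: ipB_l.
have e2 : ip pi g w = ip pi g g - ip pi g u by apply: ipB_r.
have e3 : ip pi u w = ip pi u g - ip pi u u by apply: ipB_r.
have e4 : ip pi w (Pf P w) = ip pi g (Pf P w) - ip pi u (Pf P w) by apply: ipB_l.
have Pw : forall y, Pf P w y = Pf P g y - Pf P u y.
  by move=> y; rewrite /Pf -sumrB; apply: eq_bigr => z _; rewrite /w; ring.
have e5 : ip pi g (Pf P w) = ip pi g (Pf P g) - ip pi g (Pf P u) by apply: ipB_r.
have e6 : ip pi u (Pf P w) = ip pi u (Pf P g) - ip pi u (Pf P u) by apply: ipB_r.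
have e7 : ip pi g (Pf P u) = ip pi u (Pf P g) by rewrite (ip_adj _ _ revP) ip_sym.
have e8 : ip pi g u = ip pi u g by rewrite ip_sym.
lra.
Qed.

Lemma mulmx_ring (R : realType) n (A B : 'M[R]_n) : A * B = A *m B.
Proof. by []. Qed.

Lemma Pk_pow (R : realType) n (P : 'M[R]_n) (g : 'I_n -> R) k x :
  Pk P k g x = \sum_z (P ^+ k) x z * g z.
Proof.
rewrite /Pk; elim: k x => [|k IH] x.
  rewrite /= expr0 (bigD1 x) //= big1 => [|z /negbTE zx]; last by rewrite !mxE eq_sym zx mul0r.
  by rewrite !mxE eqxx mul1r addr0.
rewrite (_ : iter k.+1 (Pf P) g x = \sum_z P x z * iter k (Pf P) g z) //.
rewrite exprS mulmx_ring.
under eq_bigr => z _ do rewrite IH mulr_sumr.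
rewrite exchange_big /=; apply: eq_bigr => w _; rewrite !mxE mulr_suml.
by apply: eq_bigr => z _; rewrite mulrA.
Qed.

Lemma pow_ge0 (R : realType) n (P : 'M[R]_n) :
  is_transition P -> forall k x y, 0 <= (P ^+ k) x y.
Proof.
move=> [P0 _]; elim=> [|k IH] x y.
  by rewrite expr0 !mxE ler0n.
rewrite exprS mulmx_ring !mxE; apply: sumr_ge0 => z _; exact: mulr_ge0.
Qed.

Lemma harmonic_const (R : realType) n (P : 'M[R]_n) (v : 'I_n -> R) :
  is_transition P -> irreducible P -> (forall x, Pf P v x = v x) ->
  forall x y, v x = v y.
Proof.
move=> tP irr hv.
have vk : forall k x, Pk P k v x = v x.
  elim=> [//|k IH] x /=; rewrite -[RHS]hv /Pf.
  by apply: eq_bigr => z _; rewrite IH.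
have rk : forall k x, \sum_z (P ^+ k) x z = 1.
  move=> k x; have := Pk_one tP k x; rewrite Pk_pow.
  by under eq_bigr => z _ do rewrite mulr1.
suff : forall x0, (forall i, v i <= v x0) -> forall y, v y = v x0.
  move=> H x y.
  have [x0 _ Hm] : exists2 x0, true & forall i, v i <= v x0.
    case: (@Order.TotalTheory.arg_maxP _ _ _ x xpredT v isT) => i _ Hi.
    by exists i => // j; apply: Hi.
  by rewrite (H x0 Hm x) (H x0 Hm y).
move=> x0 Hm y.
have [k Pk0] := irr x0 y.
have S : \sum_z (P ^+ k) x0 z * (v x0 - v z) = 0.
  under eq_bigr => z _ do rewrite mulrBr.
  rewrite sumrB -mulr_suml rk mul1r -Pk_pow vk subrr //.
have ge0 : forall z, true -> 0 <= (P ^+ k) x0 z * (v x0 - v z).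
  by move=> z _; rewrite mulr_ge0 ?subr_ge0 ?pow_ge0.
have := psumr_eq0P ge0 S (i := y) isT.
move/eqP; rewrite mulf_eq0 subr_eq0 (gt_eqF Pk0) /=.
by move/eqP.
Qed.

Lemma solv (R : realType) n (pi : 'I_n -> R) (P : 'M[R]_n) :
  is_distribution pi -> is_transition P -> reversible pi P -> irreducible P ->
  forall f : 'I_n -> R, \sum_y pi y * f y = 0 ->
  exists u : 'I_n -> R, forall y, u y - Pf P u y = f y.
Proof.
move=> [pi0 pi1] tP rev irr f f0.
have [x0 _] : exists x0 : 'I_n, true.
  case: n pi f pi0 pi1 P tP rev irr f0 => [|n] pi f pi0 pi1 P tP rev irr f0.
    by rewrite big_ord0 in pi1; move/eqP: pi1; rewrite eq_sym oner_eq0.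
  by exists ord0.
pose M := (1%:M - P)^T.
have ME : forall y x, M y x = (x == y)%:R - P x y by move=> y x; rewrite !mxE.
pose pcol := \col_x pi x.
have M1 : M *m pcol = 0.
  apply/colP => x; rewrite !mxE.
  under eq_bigr => y _ do rewrite ME !mxE mulrBl.
  rewrite sumrB (bigD1 x) //= big1 => [|y /negbTE yx]; last by rewrite yx mul0r.
  rewrite eqxx mul1r addr0.
  under eq_bigr => y _ do rewrite mulrC rev.
  by rewrite -mulr_sumr (proj2 tP) mulr1 subrr.
pose ones := (const_mx 1 : 'rV[R]_n).
have K1 : (kermx M <= ones)%MS.
  apply/row_subP => i; set w := row i (kermx M).
  have /sub_kermxP wM : (w <= kermx M)%MS by exact: row_sub.
  clearbody w.
  have hv : forall x, Pf P (fun y => w 0 y) x = w 0 x.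
    move=> x; have /rowP /(_ x) := wM; rewrite !mxE.
    under eq_bigr => y _ do rewrite ME mulrBr.
    rewrite sumrB (bigD1 x) //= big1 => [|y /negbTE yx]; last by rewrite eq_sym yx mulr0.
    rewrite eqxx mulr1 addr0 /Pf => /eqP; rewrite subr_eq0 => /eqP ->.
    by apply: eq_bigr => y _; rewrite mulrC.
  have -> : w = w 0 x0 *: ones.
    apply/rowP => y; rewrite !mxE mulr1.
    by rewrite (harmonic_const tP irr hv y x0).
  by apply: scalemx_sub; exact: submx_refl.
have rK : (\rank (kermx M) <= 1)%N.
  by apply: leq_trans (mxrankS K1) (rank_leq_row ones).
have rM : (n - \rank M <= 1)%N by rewrite -mxrank_ker.
have rp : \rank pcol = 1%N.
  apply/eqP; rewrite eqn_leq rank_leq_col lt0n mxrank_eq0.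
  apply/eqP => /colP /(_ x0); rewrite !mxE => /eqP.
  by rewrite (gt_eqF (pi0 x0)).
have MK : (M <= kermx pcol)%MS by apply/sub_kermxP.
have KM : (kermx pcol <= M)%MS.
  rewrite -(mxrank_leqif_sup MK).2 mxrank_ker rp.
  have := mxrankS MK; rewrite mxrank_ker rp.
  have := rank_leq_row M.
  move=> *; apply/eqP; lia.
pose frow := \row_y f y.
have FK : (frow <= kermx pcol)%MS.
  apply/sub_kermxP/rowP => i; rewrite !mxE -[RHS]f0.
  by apply: eq_bigr => y _; rewrite !mxE mulrC.
have /submxP [D FD] := submx_trans FK KM.
exists (fun y => D 0 y) => x.
have /rowP /(_ x) := FD; rewrite !mxE => ->.
under eq_bigr => y _ do rewrite ME mulrBr.
rewrite sumrB (bigD1 x) //= big1 => [|y /negbTE yx]; last by rewrite eq_sym yx mulr0.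
rewrite eqxx mulr1 addr0 /Pf; congr (_ - _).
by apply: eq_bigr => y _; rewrite mulrC.
Qed.

End MarkovPart.

Lemma sym_aux (R : realType) (a b si sj p q : R) :
  0 < si -> 0 < sj -> si ^+ 2 = a -> sj ^+ 2 = b -> a * p = b * q ->
  sj * q / si = si * p / sj.
Proof.
move=> si0 sj0 ha hb e.
have n1 : si != 0 by rewrite gt_eqF.
have n2 : sj != 0 by rewrite gt_eqF.
have -> : si * p / sj = (a * p) / (si * sj) by rewrite -ha; field; apply/andP.
have -> : sj * q / si = (b * q) / (si * sj) by rewrite -hb; field; apply/andP.
by rewrite e.
Qed.

Theorem proposition5 (R : realType) (n : nat) (pi : 'I_n -> R) (P Q : 'M[R]_n) :
  is_distribution pi ->
  is_transition P -> is_transition Q ->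
  reversible pi P -> reversible pi Q ->
  irreducible P -> irreducible Q ->
  efficiency_dominates pi P Q ->
  eigen_dominates P Q.
Proof.
move=> dist tP tQ revP revQ irrP irrQ dom.
have pi0 : forall x, 0 < pi x by case: dist.
have L := loewner (fun x => ltW (pi0 x)) tP tQ revP revQ (solv dist tP revP irrP) dom.
pose s := fun i => Num.sqrt (pi i).
have s0 : forall i, 0 < s i by move=> i; rewrite sqrtr_gt0.
have s2 : forall i, s i ^+ 2 = pi i by move=> i; rewrite sqr_sqrtr // ltW.
pose sym M := \matrix_(i, j) (s i * M i j / s j) : 'M[R]_n.
have symT : forall M : 'M[R]_n, reversible pi M -> (sym M)^T = sym M.
  move=> M rev; apply/matrixP => i j; rewrite !mxE.
  exact: (sym_aux (s0 i) (s0 j) (s2 i) (s2 j) (rev i j)).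
have symQ : forall (M : 'M[R]_n) (x : 'rV[R]_n),
    (x *m sym M *m x^T) 0 0 = ip pi (fun y => x 0 y / s y) (Pf M (fun y => x 0 y / s y)).
  move=> M x; rewrite !mxE /ip /Pf.
  under eq_bigr => j _ do rewrite !mxE mulr_suml.
  rewrite exchange_big /=.
  apply: eq_bigr => i _; rewrite mulr_sumr; apply: eq_bigr => j _.
  rewrite !mxE -(s2 i).
  have := s0 i; have := s0 j => h1 h2.
  by field; rewrite !gt_eqF.
have D1 : diag_mx (\row_i s i) *m diag_mx (\row_i (s i)^-1) = 1%:M.
  apply/matrixP => i j; rewrite mul_diag_mx !mxE.
  case: eqP => [->|_]; rewrite ?mulr1n ?mulr0n ?mulr0 //.
  by rewrite mulfV // gt_eqF.
have [Du _] := mulmx1_unit D1.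
have cp : forall M : 'M[R]_n, char_poly (sym M) = char_poly M.
  move=> M; rewrite -[RHS](char_poly_conj M Du).
  have iD : invmx (diag_mx (\row_i s i)) = diag_mx (\row_i (s i)^-1).
    by rewrite -[RHS](mulKmx Du (diag_mx (\row_i (s i)^-1))) D1 mulmx1.
  congr char_poly; rewrite iD.
  apply/matrixP => i j; rewrite mul_mx_diag mul_diag_mx !mxE //.
have AB : forall x : 'rV[R]_n, (x *m sym P *m x^T) 0 0 <= (x *m sym Q *m x^T) 0 0.
  by move=> x; rewrite !symQ; apply: L.
have [lam [beta [[lP cA] [bP cB] lb]]] := weyl (symT _ revP) (symT _ revQ) AB.
exists lam, beta; split => //.
  by split => //; rewrite -cp.
by split => //; rewrite -cp.
Qed.
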